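(* (i) For every $n\ge 2$ there is a locally finite $n$-directed-distributive variety which is not $(2n-1)$-reversed-modular, hence not $(2n-2)$-modular. (ii) Every $n$-directed-distributive variety satisfies the congruence identity $\alpha(\beta\circ\gamma\circ\beta)\subseteq\alpha\beta\circ\alpha\gamma\circ\stackrel{2n-1}{\dots}\circ\alpha\beta$; in particular it is $(2n-1)$-modular.
   Context: Directed J\'onsson terms: ternary terms $t_0,\dots,t_n$ with $t_0(x,y,z)=x$, $t_n(x,y,z)=z$, $t_h(x,y,x)=x$ for all $0\le h\le n$, and $t_h(x,z,z)=t_{h+1}(x,x,z)$ for all $0\le h<n$. A variety is $n$-directed-distributive if it has directed J\'onsson terms $t_0,\dots,t_n$. Day terms: $4$-ary $u_0,\dots,u_m$ with $u_k(x,y,y,x)=x$ for all $k$, $u_0(x,y,z,w)=x$, $u_m(x,y,z,w)=w$, $u_k(x,x,w,w)=u_{k+1}(x,x,w,w)$ for even $k$, $u_k(x,y,y,w)=u_{k+1}(x,y,y,w)$ for odd $k$; reversed Day terms: even/odd exchanged in these last two. $m$-modular ($m$-reversed-modular): having Day (reversed Day) terms $u_0,\dots,u_m$. In congruence identities juxtaposition is intersection, $\circ$ composition, and $X\circ Y\circ\stackrel{k}{\dots}\circ Z$ is the alternating composition $X\circ Y\circ X\circ\cdots$ with $k$ factors (last factor $Z$). *)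

(* Defs.v *)
From Stdlib Require Import Arith List.
From Stdlib Require Fin.
Import ListNotations.

Record signature := Signature {
  op : Type;
  arity : op -> nat }.

Record algebra (S : signature) := Algebra {
  carrier : Type;
  interp : forall o : op S, (Fin.t (arity S o) -> carrier) -> carrier }.
Arguments carrier {S} _.
Arguments interp {S} _ _ _.

Inductive term (S : signature) (V : Type) : Type :=
  | Var : V -> term S V
  | App : forall o : op S, (Fin.t (arity S o) -> term S V) -> term S V.
Arguments Var {S V} _.
Arguments App {S V} _ _.

Fixpoint eval {S : signature} {V : Type} (A : algebra S) (env : V -> carrier A)
  (t : term S V) : carrier A :=
  match t with
  | Var v => env v
  | App o args => interp A o (fun i => eval A env (args i))
  end.

(** Identities are pairs of terms in countably many variables; a variety is
    the class of models of a set of identities (equational class). *)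
Definition identity (S : signature) : Type := (term S nat * term S nat)%type.

Definition models {S : signature} (A : algebra S) (Sigma : identity S -> Prop) : Prop :=
  forall e, Sigma e -> forall env : nat -> carrier A, eval A env (fst e) = eval A env (snd e).

Inductive var3 := X3 | Y3 | Z3.
Inductive var4 := X4 | Y4 | Z4 | W4.

Definition env3 {T : Type} (x y z : T) (v : var3) : T :=
  match v with X3 => x | Y3 => y | Z3 => z end.
Definition env4 {T : Type} (x y z w : T) (v : var4) : T :=
  match v with X4 => x | Y4 => y | Z4 => z | W4 => w end.

Definition ap3 {S} (A : algebra S) (t : term S var3) (x y z : carrier A) : carrier A :=
  eval A (env3 x y z) t.
Definition ap4 {S} (A : algebra S) (u : term S var4) (x y z w : carrier A) : carrier A :=
  eval A (env4 x y z w) u.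

Definition directed_distributive (S : signature) (Sigma : identity S -> Prop) (n : nat) : Prop :=
  exists t : nat -> term S var3,
    forall A : algebra S, models A Sigma ->
    forall x y z : carrier A,
      ap3 A (t 0) x y z = x /\
      ap3 A (t n) x y z = z /\
      (forall h, h <= n -> ap3 A (t h) x y x = x) /\
      (forall h, h < n -> ap3 A (t h) x z z = ap3 A (t (Datatypes.S h)) x x z).

Definition has_day_terms (rev : bool) (S : signature) (Sigma : identity S -> Prop) (m : nat) : Prop :=
  exists u : nat -> term S var4,
    forall A : algebra S, models A Sigma ->
    forall x y z w : carrier A,
      (forall k, k <= m -> ap4 A (u k) x y y x = x) /\
      ap4 A (u 0) x y z w = x /\
      ap4 A (u m) x y z w = w /\
      (forall k, k < m -> Nat.even k = negb rev ->
          ap4 A (u k) x x w w = ap4 A (u (Datatypes.S k)) x x w w) /\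
      (forall k, k < m -> Nat.even k = rev ->
          ap4 A (u k) x y y w = ap4 A (u (Datatypes.S k)) x y y w).

Definition modular S Sigma m := has_day_terms false S Sigma m.
Definition reversed_modular S Sigma m := has_day_terms true S Sigma m.

Definition finite (T : Type) : Prop := exists l : list T, forall x, In x l.

Definition subuniverse {S} (A : algebra S) (P : carrier A -> Prop) : Prop :=
  forall o (args : Fin.t (arity S o) -> carrier A),
    (forall i, P (args i)) -> P (interp A o args).

Definition generated_by {S} (A : algebra S) (g : list (carrier A)) : Prop :=
  forall a : carrier A,
    forall P : carrier A -> Prop, subuniverse A P -> (forall x, In x g -> P x) -> P a.

Definition locally_finite (S : signature) (Sigma : identity S -> Prop) : Prop :=
  forall A : algebra S, models A Sigma ->
  forall g : list (carrier A), generated_by A g -> finite (carrier A).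

Definition congruence {S} (A : algebra S) (R : carrier A -> carrier A -> Prop) : Prop :=
  (forall x, R x x) /\ (forall x y, R x y -> R y x) /\
  (forall x y z, R x y -> R y z -> R x z) /\
  (forall o (a b : Fin.t (arity S o) -> carrier A),
     (forall i, R (a i) (b i)) -> R (interp A o a) (interp A o b)).

Definition rcomp {T} (R Q : T -> T -> Prop) : T -> T -> Prop :=
  fun x z => exists y, R x y /\ Q y z.
Definition rmeet {T} (R Q : T -> T -> Prop) : T -> T -> Prop :=
  fun x y => R x y /\ Q x y.

Fixpoint alt_comp {T} (R Q : T -> T -> Prop) (k : nat) : T -> T -> Prop :=
  match k with
  | 0 => fun x y => x = y
  | S k' => rcomp R (alt_comp Q R k')
  end.

(* Main.v *)
Require Import Defs.
From Stdlib Require Import Arith List.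
From Stdlib Require Import Lia ClassicalEpsilon ProofIrrelevance FunctionalExtensionality.
Import ListNotations.

Fixpoint rename {Sg : signature} {V W : Type} (f : V -> W) (t : term Sg V) : term Sg W :=
  match t with
  | Var v => Var (f v)
  | App o a => App o (fun i => rename f (a i))
  end.

Lemma eval_rename {Sg : signature} {V W : Type} (A : algebra Sg) (f : V -> W)
  (env : W -> carrier A) (t : term Sg V) :
  eval A env (rename f t) = eval A (fun v => env (f v)) t.
Proof.
  induction t as [v|o a IH]; simpl; [reflexivity|].
  f_equal. apply functional_extensionality. intro i. apply IH.
Qed.

Definition Th {Sg : signature} (A : algebra Sg) : identity Sg -> Prop :=
  fun e => forall env : nat -> carrier A, eval A env (fst e) = eval A env (snd e).

Lemma models_Th {Sg : signature} (A : algebra Sg) : models A (Th A).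
Proof. intros e H env. apply H. Qed.

Definition code3 (v : var3) : nat := match v with X3 => 0 | Y3 => 1 | Z3 => 2 end.
Definition envn {T : Type} (x y z : T) (i : nat) : T :=
  match i with 0 => x | 1 => y | _ => z end.

Lemma ident3 {Sg : signature} (A B : algebra Sg) (HB : models B (Th A))
  (p q : term Sg var3) (f g : var3 -> var3) :
  (forall x y z : carrier A,
      eval A (fun v => env3 x y z (f v)) p = eval A (fun v => env3 x y z (g v)) q) ->
  forall x y z : carrier B,
      eval B (fun v => env3 x y z (f v)) p = eval B (fun v => env3 x y z (g v)) q.
Proof.
  intros H x y z.
  assert (Hs : Th A (rename (fun v => code3 (f v)) p, rename (fun v => code3 (g v)) q)).
  { intro env. simpl. rewrite !eval_rename.
    specialize (H (env 0) (env 1) (env 2)).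
    replace (fun v => env (code3 (f v))) with (fun v => env3 (env 0) (env 1) (env 2) (f v)).
    replace (fun v => env (code3 (g v))) with (fun v => env3 (env 0) (env 1) (env 2) (g v)).
    exact H.
    all: apply functional_extensionality; intro v; first [ (destruct (g v); reflexivity) | (destruct (f v); reflexivity) ]. }
  specialize (HB _ Hs (envn x y z)). simpl in HB. rewrite !eval_rename in HB.
  replace (fun v => env3 x y z (f v)) with (fun v => envn x y z (code3 (f v))).
  replace (fun v => env3 x y z (g v)) with (fun v => envn x y z (code3 (g v))).
  exact HB.
  all: apply functional_extensionality; intro v; first [ (destruct (g v); reflexivity) | (destruct (f v); reflexivity) ].
Qed.

Lemma cong_eval {Sg : signature} (A : algebra Sg) (th : carrier A -> carrier A -> Prop)
  (Hth : congruence A th) {V : Type} (p : term Sg V) (e1 e2 : V -> carrier A) :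
  (forall v, th (e1 v) (e2 v)) -> th (eval A e1 p) (eval A e2 p).
Proof.
  intro H. induction p as [v|o a IH]; simpl; [apply H|].
  destruct Hth as (_ & _ & _ & Hc). apply Hc. intro i. apply IH.
Qed.

Lemma alt_chain {T : Type} (K : nat) : forall (R Q : T -> T -> Prop) (e : nat -> T),
  (forall k, k < K -> (Nat.even k = true -> R (e k) (e (S k))) /\
                      (Nat.even k = false -> Q (e k) (e (S k)))) ->
  alt_comp R Q K (e 0) (e K).
Proof.
  induction K as [|K IH]; intros R Q e H; simpl; [reflexivity|].
  exists (e 1). split.
  - apply (proj1 (H 0 ltac:(lia))). reflexivity.
  - apply (IH Q R (fun k => e (S k))). intros k Hk. split; intro He.
    + apply (proj2 (H (S k) ltac:(lia))). rewrite Nat.even_succ, <- Nat.negb_even, He. reflexivity.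
    + apply (proj1 (H (S k) ltac:(lia))). rewrite Nat.even_succ, <- Nat.negb_even, He. reflexivity.
Qed.

Lemma even_2h h : Nat.even (2 * h) = true.
Proof. apply Nat.even_spec. exists h. reflexivity. Qed.
Lemma even_2h1 h : Nat.even (S (2 * h)) = false.
Proof. rewrite Nat.even_succ, <- Nat.negb_even, even_2h. reflexivity. Qed.

Lemma k_cases k : exists h, k = 2 * h \/ k = S (2 * h).
Proof.
  destruct (Nat.Even_or_Odd k) as [[h Hh]|[h Hh]]; exists h; lia.
Qed.

Lemma mod_rev (Sg : signature) (Sigma : identity Sg -> Prop) (m : nat) :
  modular Sg Sigma m -> reversed_modular Sg Sigma (S m).
Proof.
  intros [u Hu]. exists (fun k => match k with 0 => Var X4 | S k' => u k' end).
  intros B HB x y z w. destruct (Hu B HB x y z w) as (H1 & H2 & H3 & H4 & H5).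
  split; [|split; [|split; [|split]]].
  - intros [|k] Hk; [reflexivity|]. apply H1; lia.
  - reflexivity.
  - exact H3.
  - intros [|k] Hk He; [discriminate|].
    apply H4; [lia|]. rewrite Nat.even_succ, <- Nat.negb_even in He.
    destruct (Nat.even k); simpl in *; congruence.
  - intros [|k] Hk He.
    + simpl. symmetry. specialize (Hu B HB x y y w). apply Hu.
    + apply H5; [lia|]. rewrite Nat.even_succ, <- Nat.negb_even in He.
      destruct (Nat.even k); simpl in *; congruence.
Qed.

Fixpoint bnd {Sg : signature} (k : nat) (t : term Sg nat) : Prop :=
  match t with
  | Var i => i < k
  | App o a => forall i, bnd k (a i)
  end.

Lemma eval_bnd {Sg : signature} (A : algebra Sg) (k : nat) (t : term Sg nat)
  (e1 e2 : nat -> carrier A) :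
  bnd k t -> (forall i, i < k -> e1 i = e2 i) -> eval A e1 t = eval A e2 t.
Proof.
  intros Hb He. induction t as [v|o a IH]; simpl in *; [apply He; exact Hb|].
  f_equal. apply functional_extensionality. intro i. apply IH. apply Hb.
Qed.

Fixpoint allk {X : Type} (LA : list X) (k : nat) : list (list X) :=
  match k with
  | 0 => [[]]
  | S k => flat_map (fun a => map (cons a) (allk LA k)) LA
  end.

Lemma allk_in {X : Type} (LA : list X) (HLA : forall a, In a LA) :
  forall l, In l (allk LA (length l)).
Proof.
  induction l as [|a l IH]; simpl; [left; reflexivity|].
  apply in_flat_map. exists a. split; [apply HLA|]. apply in_map. exact IH.
Qed.

Lemma map_eq_in {X Y : Type} (f g : X -> Y) (L : list X) :
  map f L = map g L -> forall l, In l L -> f l = g l.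
Proof.
  induction L as [|a L IH]; simpl; intros H l Hl; [contradiction|].
  injection H as H1 H2. destruct Hl as [<-|Hl]; [exact H1|]. apply IH; assumption.
Qed.

Lemma lf_of_finite {Sg : signature} (A : algebra Sg) (a0 : carrier A)
  (LA : list (carrier A)) (HLA : forall a, In a LA) :
  locally_finite Sg (Th A).
Proof.
  intros B HB g Hg.
  destruct (classic (exists b : carrier B, True)) as [[b0 _]|Hn].
  2:{ exists []. intro x. exfalso. apply Hn. exists x. exact I. }
  set (k := length g).
  set (envg := fun i => nth i g b0).
  set (keyf := fun t : term Sg nat =>
                 map (fun l => eval A (fun i => nth i l a0) t) (allk LA k)).
  assert (HP : forall b, exists t, bnd k t /\ b = eval B envg t).
  { intro b. apply (Hg b (fun b => exists t, bnd k t /\ b = eval B envg t)).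
    - intros o args Hargs.
      exists (App o (fun i => proj1_sig (constructive_indefinite_description _ (Hargs i)))).
      split.
      + simpl. intro i. exact (proj1 (proj2_sig (constructive_indefinite_description _ (Hargs i)))).
      + simpl. f_equal. apply functional_extensionality. intro i.
        exact (proj2 (proj2_sig (constructive_indefinite_description _ (Hargs i)))).
    - intros x Hx. destruct (In_nth g x b0 Hx) as [i [Hi Hn]].
      exists (Var i). split; [exact Hi|]. simpl. unfold envg. symmetry. exact Hn. }
  set (K := length (allk LA k)).
  set (rep := fun key : list (carrier A) =>
     match excluded_middle_informative
             (exists b, exists t, bnd k t /\ keyf t = key /\ b = eval B envg t) with
     | left H => proj1_sig (constructive_indefinite_description _ H)
     | right _ => b0
     end).
  exists (map rep (allk LA K)).
  intro b. destruct (HP b) as [t [Hbt Hb]].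
  apply in_map_iff. exists (keyf t). split.
  2:{ assert (Hl : length (keyf t) = K) by (unfold keyf, K; apply length_map).
      rewrite <- Hl. apply allk_in. exact HLA. }
  unfold rep. destruct excluded_middle_informative as [H|H].
  2:{ exfalso. apply H. exists b, t. auto. }
  destruct (constructive_indefinite_description _ H) as [b' [t' [Hbt' [Hk Hb']]]]. simpl.
  rewrite Hb', Hb.
  apply (HB (t', t)). intro env. simpl.
  set (l := map env (seq 0 k)).
  assert (Hin : In l (allk LA k)).
  { assert (Hlen : length l = k) by (unfold l; rewrite length_map, length_seq; reflexivity).
    pose proof (allk_in LA HLA l) as Hx. rewrite Hlen in Hx. exact Hx. }
  assert (Hnth : forall i, i < k -> env i = nth i l a0).
  { intros i Hi. unfold l. rewrite (nth_indep _ a0 (env 0)) by (rewrite length_map, length_seq; exact Hi).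
    rewrite map_nth, seq_nth by exact Hi. reflexivity. }
  rewrite (eval_bnd A k t' env (fun i => nth i l a0) Hbt' Hnth).
  rewrite (eval_bnd A k t env (fun i => nth i l a0) Hbt Hnth).
  exact (map_eq_in _ _ _ Hk l Hin).
Qed.

Definition med (a b c : nat) := if a <=? b then (if c <=? a then a else if c <=? b then c else b) else (if c <=? b then b else if c <=? a then c else a).
Definition T (N h x y z : nat) : nat :=
  if x <=? z then med x z (h - 1 + (if h <=? y then 1 else 0))
  else med x z (N - h + (if N - h <? y then 1 else 0)).
Ltac dest := repeat (match goal with
  | |- context [if ?a <=? ?b then _ else _] => destruct (Nat.leb_spec a b)
  | |- context [if ?a <? ?b then _ else _] => destruct (Nat.ltb_spec a b)
  | H : context [if ?a <=? ?b then _ else _] |- _ => destruct (Nat.leb_spec a b)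
  | H : context [if ?a <? ?b then _ else _] |- _ => destruct (Nat.ltb_spec a b)
  end; cbv iota beta in *; try lia).

Lemma Trho N h a1 a2 a3 b1 b2 b3 c1 c2 c3 : 1 <= h <= N ->
  a1 <= N -> a2 <= N -> a3 <= N -> b1 <= N -> b2 <= N -> b3 <= N -> c1 <= N -> c2 <= N -> c3 <= N ->
  b1 <= a1 + c1 + 1 -> b2 <= a2 + c2 + 1 -> b3 <= a3 + c3 + 1 ->
  T N h b1 b2 b3 <= T N h a1 a2 a3 + T N h c1 c2 c3 + 1.
Proof. intros. unfold T, med. dest. Qed.
Lemma Tle N h x y z x' y' z' : 1 <= h <= N -> x <= x' -> y <= y' -> z <= z' -> x' <= N -> z' <= N ->
  T N h x y z <= T N h x' y' z'.
Proof. intros. unfold T, med. dest. Qed.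
Lemma Tbound N h x y z : x <= N -> z <= N -> T N h x y z <= N.
Proof. intros. unfold T, med. dest. Qed.

Definition TT (N h x y z : nat) : nat :=
  match h with 0 => x | S h' => if h' <? N then T N (S h') x y z else z end.

Lemma TT_id N h x y : x <= N -> TT N h x y x = x.
Proof. intros. destruct h; simpl; [reflexivity|]. unfold T, med. dest. Qed.
Lemma TT_dir N h x z : 1 <= N -> h < S N -> x <= N -> z <= N -> TT N h x z z = TT N (S h) x x z.
Proof. intros. destruct h; simpl; unfold T, med; dest. Qed.

Definition sigN : signature := Signature nat (fun _ => 3).
Definition AN (N : nat) : Type := {x : nat | x <= N}.
Definition hof (N o : nat) : nat := S (Nat.min o (N - 1)).
Definition f1 : Fin.t 3 := Fin.F1.
Definition f2 : Fin.t 3 := Fin.FS Fin.F1.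
Definition f3 : Fin.t 3 := Fin.FS (Fin.FS Fin.F1).

Definition opN (N : nat) (o : nat) (args : Fin.t 3 -> AN N) : AN N :=
  exist _ (T N (hof N o) (proj1_sig (args f1)) (proj1_sig (args f2)) (proj1_sig (args f3)))
    (Tbound N _ _ _ _ (proj2_sig (args f1)) (proj2_sig (args f3))).

Definition AlgN (N : nat) : algebra sigN := Algebra sigN (AN N) (opN N).

Lemma AN_eq N (a b : AN N) : proj1_sig a = proj1_sig b -> a = b.
Proof.
  destruct a as [a pa], b as [b pb]; simpl; intros ->. f_equal. apply proof_irrelevance.
Qed.

Definition args3 {X : Type} (a b c : X) (i : Fin.t 3) : X :=
  match proj1_sig (Fin.to_nat i) with 0 => a | 1 => b | _ => c end.

Definition tt (N h : nat) : term sigN var3 :=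
  match h with
  | 0 => Var X3
  | S h' => if h' <? N then @App sigN var3 h' (args3 (Var X3) (Var Y3) (Var Z3)) else Var Z3
  end.

Lemma tt_val N h (a b c : AN N) :
  proj1_sig (ap3 (AlgN N) (tt N h) a b c) = TT N h (proj1_sig a) (proj1_sig b) (proj1_sig c).
Proof.
  destruct h as [|h]; [reflexivity|].
  unfold tt, TT. destruct (Nat.ltb_spec h N); [|reflexivity].
  unfold ap3. simpl. unfold hof. replace (Nat.min h (N - 1)) with h by lia. reflexivity.
Qed.

Definition a0 (N : nat) : AN N := exist _ 0 (Nat.le_0_l N).
Definition aN (N : nat) : AN N := exist _ N (le_n N).

Lemma pres_le N (H1 : 1 <= N) {V : Type} (p : term sigN V) (e1 e2 : V -> AN N) :
  (forall v, proj1_sig (e1 v) <= proj1_sig (e2 v)) ->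
  proj1_sig (eval (AlgN N) e1 p) <= proj1_sig (eval (AlgN N) e2 p).
Proof.
  intro H. induction p as [v|o a IH]; simpl; [apply H|].
  apply Tle; [unfold hof; lia | apply IH | apply IH | apply IH |
              apply (proj2_sig (eval (AlgN N) e2 (a f1))) | apply (proj2_sig (eval (AlgN N) e2 (a f3)))].
Qed.

Lemma pres_rho N (H1 : 1 <= N) {V : Type} (p : term sigN V) (e1 e2 e3 : V -> AN N) :
  (forall v, proj1_sig (e2 v) <= proj1_sig (e1 v) + proj1_sig (e3 v) + 1) ->
  proj1_sig (eval (AlgN N) e2 p) <= proj1_sig (eval (AlgN N) e1 p) + proj1_sig (eval (AlgN N) e3 p) + 1.
Proof.
  intro H. induction p as [v|o a IH]; simpl; [apply H|].
  apply Trho; try apply IH; try (unfold hof; lia); apply proj2_sig.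
Qed.

Lemma AN_list N : exists L : list (AN N), forall a, In a L.
Proof.
  exists (map (fun x => exist (fun x => x <= N) (Nat.min x N) (Nat.le_min_r x N)) (seq 0 (S N))).
  intros [x px]. apply in_map_iff. exists x. split.
  - apply AN_eq. simpl. lia.
  - apply in_seq. lia.
Qed.

Lemma part1 (n : nat) : 2 <= n ->
     exists (Sg : signature) (Sigma : identity Sg -> Prop),
       locally_finite Sg Sigma /\
       directed_distributive Sg Sigma n /\
       ~ reversed_modular Sg Sigma (2 * n - 1) /\
       ~ modular Sg Sigma (2 * n - 2).
Proof.
  intro Hn. set (N := n - 1). assert (HN : 1 <= N) by lia. assert (HnN : n = S N) by lia.
  exists sigN, (Th (AlgN N)).
  assert (Hnr : ~ reversed_modular sigN (Th (AlgN N)) (2 * n - 1)).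
  { intros [u Hu]. set (m := 2 * n - 1).
    set (L := fun k => proj1_sig (ap4 (AlgN N) (u k) (a0 N) (a0 N) (a0 N) (aN N))).
    set (M := fun k => proj1_sig (ap4 (AlgN N) (u k) (a0 N) (a0 N) (aN N) (aN N))).
    set (U := fun k => proj1_sig (ap4 (AlgN N) (u k) (a0 N) (aN N) (aN N) (aN N))).
    assert (HLM : forall k, L k <= M k).
    { intro k. apply pres_le; [exact HN|]. intros []; simpl; lia. }
    assert (HMU : forall k, M k <= U k).
    { intro k. apply pres_le; [exact HN|]. intros []; simpl; lia. }
    assert (HUL : forall k, k <= m -> U k <= L k + 1).
    { intros k Hk.
      pose proof (pres_rho N HN (u k) (@env4 (carrier (AlgN N)) (a0 N) (a0 N) (a0 N) (aN N))
                    (@env4 (carrier (AlgN N)) (a0 N) (aN N) (aN N) (aN N)) (@env4 (carrier (AlgN N)) (a0 N) (aN N) (aN N) (a0 N))) as Hr.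
      destruct (Hu (AlgN N) (models_Th (AlgN N)) (a0 N) (aN N) (aN N) (a0 N)) as (Hab & _).
      specialize (Hab k Hk). unfold ap4 in Hab. rewrite Hab in Hr. change (proj1_sig (a0 N)) with 0 in Hr.
      unfold U, L, ap4. lapply Hr; [lia|]. intros []; simpl; lia. }
    assert (Hx : forall k, k < m -> Nat.even k = true -> L (S k) = L k /\ U (S k) = U k).
    { intros k Hk He. split.
      - destruct (Hu (AlgN N) (models_Th (AlgN N)) (a0 N) (a0 N) (a0 N) (aN N)) as (_ & _ & _ & _ & H5).
        unfold L. rewrite (H5 k Hk He). reflexivity.
      - destruct (Hu (AlgN N) (models_Th (AlgN N)) (a0 N) (aN N) (aN N) (aN N)) as (_ & _ & _ & _ & H5).
        unfold U. rewrite (H5 k Hk He). reflexivity. }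
    assert (Hy : forall k, k < m -> Nat.even k = false -> M (S k) = M k).
    { intros k Hk He.
      destruct (Hu (AlgN N) (models_Th (AlgN N)) (a0 N) (a0 N) (aN N) (aN N)) as (_ & _ & _ & H4 & _).
      unfold M. rewrite (H4 k Hk He). reflexivity. }
    assert (HU0 : U 0 = 0).
    { destruct (Hu (AlgN N) (models_Th (AlgN N)) (a0 N) (aN N) (aN N) (aN N)) as (_ & H2 & _).
      unfold U. rewrite H2. reflexivity. }
    assert (HLm : L m = N).
    { destruct (Hu (AlgN N) (models_Th (AlgN N)) (a0 N) (a0 N) (a0 N) (aN N)) as (_ & _ & H3 & _).
      unfold L, m. rewrite H3. reflexivity. }
    assert (Hinv : forall k, 1 <= k <= m -> 2 * U k <= k /\ 2 * M k + 1 <= k).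
    { induction k as [|k IH]; intros Hk; [lia|].
      destruct (Nat.eq_dec k 0) as [->|Hk0].
      - destruct (Hx 0 ltac:(lia) eq_refl) as [_ HU1]. rewrite HU0 in HU1.
        pose proof (HMU 1). lia.
      - specialize (IH ltac:(lia)).
        destruct (Nat.even k) eqn:He.
        + destruct (Hx k ltac:(lia) He) as [_ HUk]. pose proof (HMU (S k)). lia.
        + pose proof (Hy k ltac:(lia) He). pose proof (HUL (S k) ltac:(lia)).
          pose proof (HLM (S k)). lia. }
    assert (Hev : Nat.even (m - 1) = true).
    { replace (m - 1) with (2 * N) by (unfold m; lia). apply even_2h. }
    destruct (Hx (m - 1) ltac:(unfold m; lia) Hev) as [HL _].
    replace (S (m - 1)) with m in HL by (unfold m; lia).
    destruct (Hinv (m - 1) ltac:(unfold m; lia)) as [_ HM].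
    pose proof (HLM (m - 1)). unfold m in *. lia. }
  split; [|split; [|split]].
  - destruct (AN_list N) as [LA HLA]. exact (lf_of_finite (AlgN N) (a0 N) LA HLA).
  - exists (tt N). intros B HB x y z.
    assert (Hid : forall h, ap3 B (tt N h) x y x = x).
    { intro h.
      pose proof (ident3 (AlgN N) B HB (tt N h) (Var X3)
                  (fun v => match v with Z3 => X3 | w => w end) (fun v => v)) as Hi.
      lapply Hi.
      - intro Hi'. specialize (Hi' x y z). unfold ap3. cbv beta in Hi'.
        replace (env3 x y x) with (fun v => env3 x y z match v with Z3 => X3 | w => w end)
          by (apply functional_extensionality; intros []; reflexivity).
        exact Hi'.
      - intros a b c. apply AN_eq. cbv beta.
        replace (fun v => env3 a b c match v with Z3 => X3 | w => w end) with (env3 a b a)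
          by (apply functional_extensionality; intros []; reflexivity).
        change (proj1_sig (ap3 (AlgN N) (tt N h) a b a) = proj1_sig a).
        rewrite tt_val. apply TT_id. apply proj2_sig. }
    split; [|split; [|split]].
    + reflexivity.
    + rewrite HnN. unfold ap3, tt. rewrite Nat.ltb_irrefl. reflexivity.
    + intros h _. apply Hid.
    + intros h Hh.
      pose proof (ident3 (AlgN N) B HB (tt N h) (tt N (S h))
                  (fun v => match v with Y3 => Z3 | w => w end)
                  (fun v => match v with Y3 => X3 | w => w end)) as Hi.
      lapply Hi.
      * intro Hi'. specialize (Hi' x y z). unfold ap3. cbv beta in Hi'.
        replace (env3 x z z) with (fun v => env3 x y z match v with Y3 => Z3 | w => w end)
          by (apply functional_extensionality; intros []; reflexivity).
        replace (env3 x x z) with (fun v => env3 x y z match v with Y3 => X3 | w => w end)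
          by (apply functional_extensionality; intros []; reflexivity).
        exact Hi'.
      * intros a b c. apply AN_eq. cbv beta.
        replace (fun v => env3 a b c match v with Y3 => Z3 | w => w end) with (env3 a c c)
          by (apply functional_extensionality; intros []; reflexivity).
        replace (fun v => env3 a b c match v with Y3 => X3 | w => w end) with (env3 a a c)
          by (apply functional_extensionality; intros []; reflexivity).
        change (proj1_sig (ap3 (AlgN N) (tt N h) a c c) = proj1_sig (ap3 (AlgN N) (tt N (S h)) a a c)).
        rewrite !tt_val. apply TT_dir; try apply proj2_sig; lia.
  - exact Hnr.
  - intro Hm. apply Hnr. replace (2 * n - 1) with (S (2 * n - 2)) by lia. apply mod_rev. exact Hm.
Qed.

Lemma part2 (Sg : signature) (Sigma : identity Sg -> Prop) (n : nat) : 1 <= n ->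
     directed_distributive Sg Sigma n ->
     (forall (A : algebra Sg), models A Sigma ->
      forall alpha beta gamma : carrier A -> carrier A -> Prop,
        congruence A alpha -> congruence A beta -> congruence A gamma ->
        forall x y : carrier A,
          alpha x y -> rcomp beta (rcomp gamma beta) x y ->
          alt_comp (rmeet alpha beta) (rmeet alpha gamma) (2 * n - 1) x y) /\
     modular Sg Sigma (2 * n - 1).
Proof.
  intros Hn [t Ht]. split.
  - intros B HB al be ga Hal Hbe Hga x y Hxy [a [Hxa [b [Hab Hby]]]].
    assert (Hc : forall th, congruence B th -> forall h p q r p' q' r', th p p' -> th q q' -> th r r' ->
              th (ap3 B (t h) p q r) (ap3 B (t h) p' q' r')).
    { intros th Hth h p q r p' q' r' H1 H2 H3. unfold ap3. apply cong_eval; [exact Hth|].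
      intros []; assumption. }
    assert (Hsym : forall th, congruence B th -> forall u v, th u v -> th v u).
    { intros th (_ & Hs & _) u v. apply Hs. }
    assert (Htr : forall th, congruence B th -> forall u v w, th u v -> th v w -> th u w).
    { intros th (_ & _ & Htr & _) u v w. apply Htr. }
    assert (Hrf : forall th, congruence B th -> forall u, th u u).
    { intros th (Hr & _) u. apply Hr. }
    assert (Hax : forall h q, h <= n -> al (ap3 B (t h) x q y) x).
    { intros h q Hh. destruct (Ht B HB x q y) as (_ & _ & Hid & _).
      apply Htr with (ap3 B (t h) x q x); [exact Hal| |].
      - apply Hc; [exact Hal| apply Hrf; exact Hal | apply Hrf; exact Hal | apply Hsym; [exact Hal|exact Hxy]].
      - rewrite Hid by exact Hh. apply Hrf; exact Hal. }
    set (e := fun k => if Nat.even k then ap3 B (t (Nat.div2 k)) x b y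
                       else ap3 B (t (S (Nat.div2 k))) x a y).
    assert (He0 : e 0 = x).
    { unfold e. simpl. destruct (Ht B HB x b y) as (H0 & _). exact H0. }
    assert (HeK : e (2 * n - 1) = y).
    { unfold e. replace (2 * n - 1) with (S (2 * (n - 1))) by lia.
      rewrite even_2h1, Nat.div2_succ_double. replace (S (n - 1)) with n by lia.
      destruct (Ht B HB x a y) as (_ & H1 & _). exact H1. }
    rewrite <- He0, <- HeK. apply alt_chain.
    intros k Hk. destruct (k_cases k) as [h [->| ->]].
    + split; intro He; [|rewrite even_2h in He; discriminate].
      unfold e. rewrite even_2h1, even_2h, Nat.div2_double, Nat.div2_succ_double.
      split.
      * apply Htr with x; [exact Hal| apply Hax; lia |]. apply Hsym; [exact Hal|]. apply Hax; lia.
      * apply Htr with (ap3 B (t h) x y y); [exact Hbe| |].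
        -- apply Hc; [exact Hbe| apply Hrf; exact Hbe | exact Hby | apply Hrf; exact Hbe].
        -- destruct (Ht B HB x y y) as (_ & _ & _ & Hd). rewrite (Hd h ltac:(lia)).
           apply Hc; [exact Hbe| apply Hrf; exact Hbe | exact Hxa | apply Hrf; exact Hbe].
    + split; intro He; [rewrite even_2h1 in He; discriminate|].
      unfold e. replace (S (S (2 * h))) with (2 * S h) by lia.
      rewrite even_2h1, even_2h, Nat.div2_double, Nat.div2_succ_double.
      split.
      * apply Htr with x; [exact Hal| apply Hax; lia |]. apply Hsym; [exact Hal|]. apply Hax; lia.
      * apply Hc; [exact Hga| apply Hrf; exact Hga | exact Hab | apply Hrf; exact Hga].
  - set (fe := fun v => match v with X3 => X4 | Y3 => Z4 | Z3 => W4 end).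
    set (fo := fun v => match v with X3 => X4 | Y3 => Y4 | Z3 => W4 end).
    exists (fun k => if Nat.even k then rename fe (t (Nat.div2 k))
                     else rename fo (t (S (Nat.div2 k)))).
    intros B HB x y z w.
    assert (Hre : forall p, ap4 B (rename fe p) x y z w = ap3 B p x z w).
    { intro p. unfold ap4, ap3. rewrite eval_rename. f_equal.
      apply functional_extensionality; intros []; reflexivity. }
    assert (Hro : forall p, ap4 B (rename fo p) x y z w = ap3 B p x y w).
    { intro p. unfold ap4, ap3. rewrite eval_rename. f_equal.
      apply functional_extensionality; intros []; reflexivity. }
    assert (Hre' : forall p x y z w, ap4 B (rename fe p) x y z w = ap3 B p x z w).
    { intros p x' y' z' w'. unfold ap4, ap3. rewrite eval_rename. f_equal.
      apply functional_extensionality; intros []; reflexivity. }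
    assert (Hro' : forall p x y z w, ap4 B (rename fo p) x y z w = ap3 B p x y w).
    { intros p x' y' z' w'. unfold ap4, ap3. rewrite eval_rename. f_equal.
      apply functional_extensionality; intros []; reflexivity. }
    split; [|split; [|split; [|split]]].
    + intros k Hk. destruct (k_cases k) as [h [->| ->]].
      * rewrite even_2h, Nat.div2_double, Hre'. destruct (Ht B HB x y y) as (_ & _ & Hid & _).
        apply Hid. lia.
      * rewrite even_2h1, Nat.div2_succ_double, Hro'. destruct (Ht B HB x y y) as (_ & _ & Hid & _).
        apply Hid. lia.
    + simpl. rewrite Hre. destruct (Ht B HB x z w) as (H0 & _). exact H0.
    + replace (2 * n - 1) with (S (2 * (n - 1))) by lia.
      rewrite even_2h1, Nat.div2_succ_double, Hro. replace (S (n - 1)) with n by lia.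
      destruct (Ht B HB x y w) as (_ & H1 & _). exact H1.
    + intros k Hk He. destruct (k_cases k) as [h [->| ->]]; [|rewrite even_2h1 in He; discriminate].
      replace (S (2 * h)) with (S (2 * h)) by reflexivity.
      rewrite even_2h, even_2h1, Nat.div2_double, Nat.div2_succ_double, Hre', Hro'.
      destruct (Ht B HB x x w) as (_ & _ & _ & Hd). apply Hd. lia.
    + intros k Hk He. destruct (k_cases k) as [h [->| ->]]; [rewrite even_2h in He; discriminate|].
      replace (S (S (2 * h))) with (2 * S h) by lia.
      rewrite even_2h, even_2h1, Nat.div2_double, Nat.div2_succ_double, Hre', Hro'.
      reflexivity.
Qed.

Theorem theorem5p1 :
  (* (i) *)
  (forall n : nat, 2 <= n ->
     exists (S : signature) (Sigma : identity S -> Prop),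
       locally_finite S Sigma /\
       directed_distributive S Sigma n /\
       ~ reversed_modular S Sigma (2 * n - 1) /\
       ~ modular S Sigma (2 * n - 2)) /\
  (* (ii) *)
  (forall (S : signature) (Sigma : identity S -> Prop) (n : nat), 1 <= n ->
     directed_distributive S Sigma n ->
     (forall (A : algebra S), models A Sigma ->
      forall alpha beta gamma : carrier A -> carrier A -> Prop,
        congruence A alpha -> congruence A beta -> congruence A gamma ->
        forall x y : carrier A,
          alpha x y -> rcomp beta (rcomp gamma beta) x y ->
          alt_comp (rmeet alpha beta) (rmeet alpha gamma) (2 * n - 1) x y) /\
     modular S Sigma (2 * n - 1)).
Proof.
  split.
  - exact part1.
  - exact part2.
Qed.
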